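(* Let $K\subseteq\mathbb R^{|\mathcal A|\times|\mathcal X|}$ be a convex cone of entrywise nonnegative vectors $\tilde p$ for which $\operatorname{tr}[\tilde p]:=\sum_{a}\tilde p(a\mid x)$ is independent of $x$, and such that $K\supseteq\{q\,p:q\ge0,\ p\in\mathcal Q\}$. For $\mathbf y\in\mathbf f[\mathcal Q]$ define $$G(\mathbf y)=\sup\Big\{\sum_{a\in\mathcal A,x\in\mathcal X_r}\tilde p_{a,x}(a\mid x)\ :\ \tilde p_{a,x}\in K,\ \sum_{a\in\mathcal A,x\in\mathcal X_r}\operatorname{tr}[\tilde p_{a,x}]=1,\ \sum_{a\in\mathcal A,x\in\mathcal X_r}\mathbf f[\tilde p_{a,x}]=\mathbf y\Big\}.$$ Then $H(\mathbf y):=-\log_2G(\mathbf y)$ is a randomness-bounding function for $\mathcal X_r$. Moreover, for $\hat{\mathbf f}^-\le\hat{\mathbf f}^+$ in $(\mathbb R\cup\{\pm\infty\})^t$, defining $G([\hat{\mathbf f}^-,\hat{\mathbf f}^+])$ by the same supremum with the equality constraint replaced by $\hat{\mathbf f}^-\le\sum_{a,x}\mathbf f[\tilde p_{a,x}]\le\hat{\mathbf f}^+$ (componentwise), and setting $G=1$ when this problem is infeasible, the number $-\log_2G([\hat{\mathbf f}^-,\hat{\mathbf f}^+])$ is at most $\inf\{H(\mathbf y):\mathbf y\in\mathbf f[\mathcal Q]\cap[\hat{\mathbf f}^-,\hat{\mathbf f}^+]\}$.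
   Context: Setting. A Bell device consists of $k$ boxes with finite input sets $\mathcal X_i$ and output sets $\mathcal A_i$; $\mathcal X=\prod_i\mathcal X_i$, $\mathcal A=\prod_i\mathcal A_i$. Single-round behaviors $p=(p(a\mid x))_{a\in\mathcal A,x\in\mathcal X}$; $\mathcal Q$ the (convex) set of quantum behaviors, realizable by a $k$-partite quantum state and local measurements. Bell expression $f\in\mathbb R^{|\mathcal A|\times|\mathcal X|}$ acts linearly on any vector $\tilde p$ via $f[\tilde p]=\sum_{a,x}f(a,x)\tilde p(a\mid x)$; fixed $\mathbf f=(f_1,\dots,f_t)$, $\mathbf f[\tilde p]=(f_1[\tilde p],\dots,f_t[\tilde p])$, $\mathbf f[\mathcal Q]=\{\mathbf f[p]:p\in\mathcal Q\}$. Examples of admissible $K$: the cone of unnormalized quantum behaviors or any of its NPA (semidefinite) outer relaxations. RB function: for a nonempty $\mathcal X_r\subseteq\mathcal X$, a function $H:\mathbf f[\mathcal Q]\to[0,\log_2|\mathcal A|]$ such that (1) $\min_{a\in\mathcal A,x\in\mathcal X_r}(-\log_2p(a\mid x))\ge H(\mathbf f[p])$ for all $p\in\mathcal Q$, and (2) $H(q\mathbf f[p_1]+(1-q)\mathbf f[p_2])\le qH(\mathbf f[p_1])+(1-q)H(\mathbf f[p_2])$ for all $q\in[0,1]$, $p_1,p_2\in\mathcal Q$. *)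

(* Defs.v *)
From Stdlib Require Import Reals Lra Lia List Classical ClassicalDescription ClassicalEpsilon.
Open Scope R_scope.

(* Outputs a are encoded as naturals a < nA (nA = |A|), inputs x as x < nX.
   Only the product structure of A and X is irrelevant here. *)

(* A (possibly unnormalized) behavior  p~(a|x)  ∈ R^{|A|×|X|}:  p a x. *)
Definition behavior := nat -> nat -> R.
Definition bexpr := nat -> nat -> R.

Definition sumn (n : nat) (F : nat -> R) : R :=
  fold_right (fun i acc => F i + acc) 0 (seq 0 n).

Definition bell (nA nX : nat) (f : bexpr) (p : behavior) : R :=
  sumn nA (fun a => sumn nX (fun x => f a x * p a x)).

(* bold f [p] = (f_1[p], ..., f_t[p]) ; components i < t are meaningful *)
Definition fvec (nA nX : nat) (fs : nat -> bexpr) (p : behavior) : nat -> R :=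
  fun i => bell nA nX (fs i) p.

(* tr[p] := sum_a p(a|x), evaluated at input x = 0 (independent of x in K) *)
Definition trace (nA : nat) (p : behavior) : R := sumn nA (fun a => p a 0%nat).

Definition log2 (r : R) : R := ln r / ln 2.

Definition is_behavior_set (nA nX : nat) (Q : behavior -> Prop) : Prop :=
  forall p, Q p ->
    (forall a x, (a < nA)%nat -> (x < nX)%nat -> 0 <= p a x) /\
    (forall x, (x < nX)%nat -> sumn nA (fun a => p a x) = 1).

Definition convex_set (Q : behavior -> Prop) : Prop :=
  forall q p1 p2, 0 <= q <= 1 -> Q p1 -> Q p2 ->
    Q (fun a x => q * p1 a x + (1 - q) * p2 a x).

Definition admissible_cone (nA nX : nat) (Q K : behavior -> Prop) : Prop :=
  (forall p1 p2, K p1 -> K p2 -> K (fun a x => p1 a x + p2 a x)) /\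
  (forall q p, 0 <= q -> K p -> K (fun a x => q * p a x)) /\
  (forall p, K p -> forall a x, (a < nA)%nat -> (x < nX)%nat -> 0 <= p a x) /\
  (forall p, K p -> forall x x', (x < nX)%nat -> (x' < nX)%nat ->
       sumn nA (fun a => p a x) = sumn nA (fun a => p a x')) /\
  (forall q p, 0 <= q -> Q p -> K (fun a x => q * p a x)).

Definition in_fQ (nA nX t : nat) (fs : nat -> bexpr) (Q : behavior -> Prop)
  (y : nat -> R) : Prop :=
  exists p, Q p /\ forall i, (i < t)%nat -> y i = fvec nA nX fs p i.

Definition sumAX (nA nX : nat) (Xr : nat -> bool) (F : nat -> nat -> R) : R :=
  sumn nA (fun a => sumn nX (fun x => if Xr x then F a x else 0)).

Definition feasible_obj (nA nX t : nat) (Xr : nat -> bool) (fs : nat -> bexpr)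
  (K : behavior -> Prop) (C : (nat -> R) -> Prop) (v : R) : Prop :=
  exists pt : nat -> nat -> behavior,
    (forall a x, (a < nA)%nat -> Xr x = true -> K (pt a x)) /\
    sumAX nA nX Xr (fun a x => trace nA (pt a x)) = 1 /\
    C (fun i => sumAX nA nX Xr (fun a x => bell nA nX (fs i) (pt a x))) /\
    v = sumAX nA nX Xr (fun a x => pt a x a x).

(* Supremum (least upper bound) of a set of reals, when it exists (junk 0 otherwise). *)
Definition supR (E : R -> Prop) : R :=
  match excluded_middle_informative (exists l, is_lub E l) with
  | left h => proj1_sig (constructive_indefinite_description _ h)
  | right _ => 0
  end.

Definition G (nA nX t : nat) (Xr : nat -> bool) (fs : nat -> bexpr)
  (K : behavior -> Prop) (y : nat -> R) : R :=
  supR (feasible_obj nA nX t Xr fs K (fun s => forall i, (i < t)%nat -> s i = y i)).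

Definition H (nA nX t : nat) (Xr : nat -> bool) (fs : nat -> bexpr)
  (K : behavior -> Prop) (y : nat -> R) : R :=
  - log2 (G nA nX t Xr fs K y).

Inductive ERbar : Type := Fin (r : R) | PInf | MInf.

Definition ERle (u v : ERbar) : Prop :=
  match u, v with
  | MInf, _ => True
  | _, PInf => True
  | Fin r, Fin s => r <= s
  | _, _ => False
  end.

Definition in_box (t : nat) (lo hi : nat -> ERbar) (s : nat -> R) : Prop :=
  forall i, (i < t)%nat -> ERle (lo i) (Fin (s i)) /\ ERle (Fin (s i)) (hi i).

Definition Gbox (nA nX t : nat) (Xr : nat -> bool) (fs : nat -> bexpr)
  (K : behavior -> Prop) (lo hi : nat -> ERbar) : R :=
  let S := feasible_obj nA nX t Xr fs K (in_box t lo hi) in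
  match excluded_middle_informative (exists v, S v) with
  | left _ => supR S
  | right _ => 1
  end.

(* Condition (1) is stated for each (a,x) with x ∈ X_r; when p(a|x) = 0 the
   left side is +∞ and the inequality is trivial, so only p(a|x) > 0 is stated. *)
Definition RB_function (nA nX t : nat) (Xr : nat -> bool) (fs : nat -> bexpr)
  (Q : behavior -> Prop) (Hf : (nat -> R) -> R) : Prop :=
  (forall y, in_fQ nA nX t fs Q y -> 0 <= Hf y <= log2 (INR nA)) /\
  (forall p, Q p -> forall a x, (a < nA)%nat -> Xr x = true -> 0 < p a x ->
      Hf (fvec nA nX fs p) <= - log2 (p a x)) /\
  (forall q p1 p2, 0 <= q <= 1 -> Q p1 -> Q p2 ->
      Hf (fun i => q * fvec nA nX fs p1 i + (1 - q) * fvec nA nX fs p2 i)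
      <= q * Hf (fvec nA nX fs p1) + (1 - q) * Hf (fvec nA nX fs p2)).

(* Main.v *)
Require Import Defs.
From Stdlib Require Import Reals Lra Lia List Classical ClassicalDescription ClassicalEpsilon Arith.
Open Scope R_scope.

Lemma fold_init (F : nat -> R) (l : list nat) (c : R) :
  fold_right (fun i acc => F i + acc) c l = fold_right (fun i acc => F i + acc) 0 l + c.
Proof. induction l; simpl; [lra| rewrite IHl; lra]. Qed.

Lemma sumn_0 F : sumn 0 F = 0.
Proof. reflexivity. Qed.

Lemma sumn_S n F : sumn (S n) F = sumn n F + F n.
Proof. unfold sumn. rewrite seq_S, fold_right_app. simpl. rewrite fold_init. lra. Qed.

Lemma sumn_ext n F G : (forall i, (i < n)%nat -> F i = G i) -> sumn n F = sumn n G.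
Proof. induction n; intros h; [reflexivity|]. rewrite !sumn_S, IHn, h; auto; intros; apply h; lia. Qed.

Lemma sumn_le n F G : (forall i, (i < n)%nat -> F i <= G i) -> sumn n F <= sumn n G.
Proof. induction n; intros h; [rewrite !sumn_0; lra|]. rewrite !sumn_S.
  assert (sumn n F <= sumn n G) by (apply IHn; intros; apply h; lia).
  assert (F n <= G n) by (apply h; lia). lra. Qed.

Lemma sumn_lin n F G c d : sumn n (fun i => c * F i + d * G i) = c * sumn n F + d * sumn n G.
Proof. induction n; [rewrite !sumn_0; ring|]. rewrite !sumn_S, IHn. ring. Qed.

Lemma sumn_scal n F c : sumn n (fun i => c * F i) = c * sumn n F.
Proof. induction n; [rewrite !sumn_0; ring|]. rewrite !sumn_S, IHn. ring. Qed.

Lemma sumn_ge0 n F : (forall i, (i < n)%nat -> 0 <= F i) -> 0 <= sumn n F.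
Proof. intros h. replace 0 with (sumn n (fun _ => 0)). apply sumn_le; auto.
  induction n; [reflexivity| rewrite sumn_S, IHn; [lra| intros; apply h; lia]]. Qed.

Lemma sumn_single n F i : (i < n)%nat -> (forall j, (j < n)%nat -> 0 <= F j) -> F i <= sumn n F.
Proof. induction n; intros hi h; [lia|]. rewrite sumn_S.
  destruct (Nat.eq_dec i n) as [->|ne].
  - assert (0 <= sumn n F) by (apply sumn_ge0; intros; apply h; lia). lra.
  - assert (F i <= sumn n F) by (apply IHn; [lia| intros; apply h; lia]).
    assert (0 <= F n) by (apply h; lia). lra. Qed.

Lemma sumn_delta n G i : (i < n)%nat -> sumn n (fun j => (if Nat.eqb j i then 1 else 0) * G j) = G i.
Proof. induction n; intros hi; [lia|]. rewrite sumn_S.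
  destruct (Nat.eq_dec i n) as [->|ne].
  - rewrite Nat.eqb_refl. replace (sumn n (fun j => (if Nat.eqb j n then 1 else 0) * G j)) with (sumn n (fun _ => 0 * G 0%nat)).
    + rewrite sumn_scal. ring.
    + apply sumn_ext. intros j hj. destruct (Nat.eqb_spec j n); [lia|ring].
  - rewrite IHn by lia. destruct (Nat.eqb_spec n i); [lia|ring]. Qed.

Lemma sumn_lt n F c : (0 < n)%nat -> (forall i, (i < n)%nat -> F i < c) -> sumn n F < INR n * c.
Proof. induction n; intros hn h; [lia|]. rewrite sumn_S, S_INR.
  destruct n. - rewrite sumn_0. simpl. assert (F 0%nat < c) by (apply h; lia). lra.
  - assert (sumn (S n) F < INR (S n) * c) by (apply IHn; [lia| intros; apply h; lia]).
    assert (F (S n) < c) by (apply h; lia). lra. Qed.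

Lemma sumAX_ext nA nX Xr F G : (forall a x, (a < nA)%nat -> (x < nX)%nat -> F a x = G a x) ->
  sumAX nA nX Xr F = sumAX nA nX Xr G.
Proof. intros h. unfold sumAX. apply sumn_ext; intros a ha. apply sumn_ext; intros x hx.
  rewrite h; auto. Qed.

Lemma sumAX_le nA nX Xr F G : (forall a x, (a < nA)%nat -> (x < nX)%nat -> Xr x = true -> F a x <= G a x) ->
  sumAX nA nX Xr F <= sumAX nA nX Xr G.
Proof. intros h. unfold sumAX. apply sumn_le; intros a ha. apply sumn_le; intros x hx.
  destruct (Xr x) eqn:E; [apply h; auto| lra]. Qed.

Lemma sumAX_lin nA nX Xr F G c d :
  sumAX nA nX Xr (fun a x => c * F a x + d * G a x) = c * sumAX nA nX Xr F + d * sumAX nA nX Xr G.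
Proof. unfold sumAX. rewrite <- sumn_lin. apply sumn_ext; intros a ha.
  rewrite <- sumn_lin. apply sumn_ext; intros x hx. destruct (Xr x); ring. Qed.

Lemma sumAX_delta nA nX Xr F a x : (a < nA)%nat -> (x < nX)%nat -> Xr x = true ->
  sumAX nA nX Xr (fun a' x' => (if andb (Nat.eqb a' a) (Nat.eqb x' x) then 1 else 0) * F a' x') = F a x.
Proof. intros ha hx hX. unfold sumAX.
  rewrite (sumn_ext nA _ (fun a' => (if Nat.eqb a' a then 1 else 0) * F a' x)).
  - apply (sumn_delta nA (fun j => F j x)); auto.
  - intros a' ha'. rewrite (sumn_ext nX _ (fun x' => (if Nat.eqb x' x then 1 else 0) * ((if Nat.eqb a' a then 1 else 0) * F a' x'))).
    + apply (sumn_delta nX (fun j => (if Nat.eqb a' a then 1 else 0) * F a' j)); auto.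
    + intros x' hx'. destruct (Nat.eqb_spec x' x) as [->|ne].
      * rewrite hX. rewrite Bool.andb_true_r. ring.
      * rewrite Bool.andb_false_r. destruct (Xr x'); ring. Qed.

Lemma bell_lin nA nX f P P' c d :
  bell nA nX f (fun b z => c * P b z + d * P' b z) = c * bell nA nX f P + d * bell nA nX f P'.
Proof. unfold bell. rewrite <- sumn_lin. apply sumn_ext; intros a ha.
  rewrite <- sumn_lin. apply sumn_ext; intros x hx. ring. Qed.

Lemma bell_scal nA nX f P c : bell nA nX f (fun b z => c * P b z) = c * bell nA nX f P.
Proof. unfold bell. rewrite <- sumn_scal. apply sumn_ext; intros a ha.
  rewrite <- sumn_scal. apply sumn_ext; intros x hx. ring. Qed.

Lemma trace_lin nA P P' c d : trace nA (fun b z => c * P b z + d * P' b z) = c * trace nA P + d * trace nA P'.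
Proof. unfold trace. apply sumn_lin. Qed.

Lemma trace_scal nA P c : trace nA (fun b z => c * P b z) = c * trace nA P.
Proof. unfold trace. apply sumn_scal. Qed.

Lemma supR_lub E : (exists v, E v) -> (forall v, E v -> v <= 1) -> is_lub E (supR E).
Proof. intros hne hb. assert (ex : exists l, is_lub E l).
  { destruct (completeness E) as [m hm]; [exists 1; exact hb| exact hne| eauto]. }
  unfold supR. destruct (excluded_middle_informative _) as [h|h]; [|contradiction].
  destruct (constructive_indefinite_description _ h); simpl; auto. Qed.

Lemma ln_le' x y : 0 < x -> x <= y -> ln x <= ln y.
Proof. intros hx hxy. destruct (Req_dec x y) as [->|ne]; [lra|]. left; apply ln_increasing; lra. Qed.

Lemma ln_le_x1 x : 0 < x -> ln x <= x - 1.
Proof. intros hx. pose proof (exp_ineq1_le (ln x)). rewrite exp_ln in H; lra. Qed.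

Lemma ln_concave a b q : 0 < a -> 0 < b -> 0 <= q <= 1 ->
  q * ln a + (1 - q) * ln b <= ln (q * a + (1 - q) * b).
Proof. intros ha hb hq. set (m := q * a + (1 - q) * b).
  assert (hm : 0 < m) by (unfold m; nra).
  pose proof (ln_le_x1 (a / m)) as h1. pose proof (ln_le_x1 (b / m)) as h2.
  assert (0 < a / m) by (apply Rdiv_lt_0_compat; lra).
  assert (0 < b / m) by (apply Rdiv_lt_0_compat; lra).
  unfold Rdiv in *. rewrite ln_mult, ln_Rinv in h1, h2 by (auto; apply Rinv_0_lt_compat; lra).
  specialize (h1 H). specialize (h2 H0).
  assert (e : q * (a * / m) + (1 - q) * (b * / m) = 1) by (unfold m; field; fold m; lra).
  nra. Qed.

Lemma log2_le x y : 0 < x -> x <= y -> log2 x <= log2 y.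
Proof. intros. unfold log2, Rdiv. apply Rmult_le_compat_r.
  - left; apply Rinv_0_lt_compat. pose proof ln_lt_2; lra.
  - apply ln_le'; auto. Qed.

Lemma lub_mix (E1 E2 : R -> Prop) l1 l2 l q :
  is_lub E1 l1 -> is_lub E2 l2 -> (exists v, E1 v) -> (exists v, E2 v) -> 0 <= q <= 1 ->
  (forall v1 v2, E1 v1 -> E2 v2 -> q * v1 + (1 - q) * v2 <= l) ->
  q * l1 + (1 - q) * l2 <= l.
Proof.
  intros [u1 m1] [u2 m2] [w1 hw1] [w2 hw2] hq h.
  assert (A : forall v2, E2 v2 -> q * l1 + (1 - q) * v2 <= l).
  { intros v2 hv2. destruct (Req_dec q 0) as [->|nq].
    - specialize (h w1 v2 hw1 hv2). lra.
    - set (b := (l - (1 - q) * v2) / q).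
      assert (eb : q * b = l - (1 - q) * v2) by (unfold b; field; auto).
      assert (l1 <= b).
      { apply m1. intros v1 hv1. specialize (h v1 v2 hv1 hv2).
        apply (Rmult_le_reg_l q); [lra|]. lra. }
      assert (q * l1 <= q * b) by (apply Rmult_le_compat_l; lra). lra. }
  destruct (Req_dec (1 - q) 0) as [e|nq].
  - specialize (A w2 hw2). rewrite e in *. lra.
  - set (b := (l - q * l1) / (1 - q)).
    assert (eb : (1 - q) * b = l - q * l1) by (unfold b; field; auto).
    assert (l2 <= b).
    { apply m2. intros v2 hv2. specialize (A v2 hv2).
      apply (Rmult_le_reg_l (1 - q)); [lra|]. lra. }
    assert ((1 - q) * l2 <= (1 - q) * b) by (apply Rmult_le_compat_l; lra). lra.
Qed.

Lemma feas_mono nA nX t Xr fs K (C C' : (nat -> R) -> Prop) v :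
  (forall s, C s -> C' s) -> feasible_obj nA nX t Xr fs K C v -> feasible_obj nA nX t Xr fs K C' v.
Proof. intros h [pt [h1 [h2 [h3 h4]]]]. exists pt; auto. Qed.

Lemma feas_le1 nA nX t Xr fs Q K C v :
  admissible_cone nA nX Q K -> (0 < nX)%nat -> feasible_obj nA nX t Xr fs K C v -> v <= 1.
Proof.
  intros [k1 [k2 [k3 [k4 k5]]]] hn [pt [hK [htr [hC ->]]]].
  rewrite <- htr. apply sumAX_le. intros a x ha hx hX.
  unfold trace. rewrite (k4 (pt a x) (hK a x ha hX) 0%nat x hn hx).
  apply (sumn_single nA (fun b => pt a x b x)); auto.
Qed.

Lemma feas_delta nA nX t Xr fs Q K p a x y :
  is_behavior_set nA nX Q -> admissible_cone nA nX Q K -> (0 < nX)%nat ->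
  Q p -> (a < nA)%nat -> (x < nX)%nat -> Xr x = true ->
  (forall i, (i < t)%nat -> y i = fvec nA nX fs p i) ->
  feasible_obj nA nX t Xr fs K (fun s => forall i, (i < t)%nat -> s i = y i) (p a x).
Proof.
  intros hQ [k1 [k2 [k3 [k4 k5]]]] hn hp ha hx hX hy.
  exists (fun a' x' => fun b z => (if andb (Nat.eqb a' a) (Nat.eqb x' x) then 1 else 0) * p b z).
  split; [|split; [|split]].
  - intros a' x' _ _. apply k5; auto. destruct (_ && _)%bool; lra.
  - rewrite (sumAX_ext _ _ _ _ (fun a' x' => (if andb (Nat.eqb a' a) (Nat.eqb x' x) then 1 else 0) * trace nA p)).
    + rewrite (sumAX_delta nA nX Xr (fun _ _ => trace nA p)); auto.
      unfold trace. apply (proj2 (hQ p hp)); auto.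
    + intros; apply trace_scal.
  - intros i hi. rewrite hy by auto.
    rewrite (sumAX_ext _ _ _ _ (fun a' x' => (if andb (Nat.eqb a' a) (Nat.eqb x' x) then 1 else 0) * bell nA nX (fs i) p)).
    + rewrite (sumAX_delta nA nX Xr (fun _ _ => bell nA nX (fs i) p)); auto.
    + intros; apply bell_scal.
  - symmetry. apply (sumAX_delta nA nX Xr (fun a' x' => p a' x')); auto.
Qed.

Lemma G_facts nA nX t Xr fs Q K x0 y :
  Xr x0 = true -> (x0 < nX)%nat ->
  is_behavior_set nA nX Q -> admissible_cone nA nX Q K ->
  in_fQ nA nX t fs Q y ->
  let S := feasible_obj nA nX t Xr fs K (fun s => forall i, (i < t)%nat -> s i = y i) in
  (exists v, S v) /\ is_lub S (G nA nX t Xr fs K y) /\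
  (0 < INR nA) /\ / INR nA <= G nA nX t Xr fs K y /\ G nA nX t Xr fs K y <= 1.
Proof.
  intros hX hx hQ hK [p [hp hy]] S.
  assert (hn : (0 < nX)%nat) by lia.
  assert (hsum : sumn nA (fun a => p a x0) = 1) by (apply (proj2 (hQ p hp)); auto).
  assert (hA : (0 < nA)%nat).
  { destruct nA; [rewrite sumn_0 in hsum; lra| lia]. }
  assert (hA' : 0 < INR nA) by (apply lt_0_INR; auto).
  assert (pig : exists a, (a < nA)%nat /\ / INR nA <= p a x0).
  { apply NNPP. intros hn'.
    assert (sumn nA (fun a => p a x0) < INR nA * / INR nA).
    { apply sumn_lt; auto. intros i hi. apply Rnot_le_lt. intros hl. apply hn'. eauto. }
    rewrite Rinv_r in H by lra. lra. }
  destruct pig as [a [ha hpa]].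
  assert (hfe : S (p a x0)) by (apply (feas_delta nA nX t Xr fs Q K p a x0 y); auto).
  assert (hlub : is_lub S (G nA nX t Xr fs K y)).
  { apply supR_lub; [eauto|]. intros v hv. eapply (feas_le1 nA nX t Xr fs Q K); [eauto | eauto | exact hv]. }
  split; [eauto|]. split; [auto|]. split; [auto|]. split.
  - destruct hlub as [u _]. specialize (u _ hfe). lra.
  - destruct hlub as [_ m]. apply m. intros v hv. eapply (feas_le1 nA nX t Xr fs Q K); [eauto | eauto | exact hv].
Qed.

Theorem mainTheorem5 (nA nX t : nat) (Xr : nat -> bool) (fs : nat -> bexpr)
  (Q K : behavior -> Prop) :
  (forall x, Xr x = true -> (x < nX)%nat) ->
  (exists x, Xr x = true) ->
  is_behavior_set nA nX Q ->
  convex_set Q ->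
  admissible_cone nA nX Q K ->
  RB_function nA nX t Xr fs Q (H nA nX t Xr fs K) /\
  (forall lo hi : nat -> ERbar,
     (forall i, (i < t)%nat -> ERle (lo i) (hi i)) ->
     forall y, in_fQ nA nX t fs Q y -> in_box t lo hi y ->
       - log2 (Gbox nA nX t Xr fs K lo hi) <= H nA nX t Xr fs K y).
Proof.
  intros hXr [x0 hX0] hQ hconv hK.
  assert (hx0 : (x0 < nX)%nat) by auto.
  assert (hn : (0 < nX)%nat) by lia.
  assert (ln2 : 0 < ln 2) by (pose proof ln_lt_2; lra).
  assert (fQ : forall p, Q p -> in_fQ nA nX t fs Q (fvec nA nX fs p)).
  { intros p hp. exists p; split; auto. }
  split; [split; [|split]|].
  - intros y hy. destruct (G_facts nA nX t Xr fs Q K x0 y hX0 hx0 hQ hK hy) as [_ [_ [hA [g1 g2]]]].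
    unfold Defs.H. split.
    + assert (log2 (G nA nX t Xr fs K y) <= log2 1) by (apply log2_le; auto;
        apply Rlt_le_trans with (/ INR nA); auto; apply Rinv_0_lt_compat; auto).
      unfold log2 in *. rewrite ln_1 in H. unfold Rdiv in H. rewrite Rmult_0_l in H. lra.
    + assert (log2 (/ INR nA) <= log2 (G nA nX t Xr fs K y)) by (apply log2_le; auto;
        apply Rinv_0_lt_compat; auto).
      unfold log2 in *. rewrite ln_Rinv in H by auto. unfold Rdiv in *. lra.
  - intros p hp a x ha hX hpos.
    destruct (G_facts nA nX t Xr fs Q K x0 _ hX0 hx0 hQ hK (fQ p hp)) as [_ [[u _] _]].
    assert (hle : p a x <= G nA nX t Xr fs K (fvec nA nX fs p)).
    { apply u. apply (feas_delta nA nX t Xr fs Q K p a x); auto. }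
    unfold Defs.H. assert (log2 (p a x) <= log2 (G nA nX t Xr fs K (fvec nA nX fs p))) by (apply log2_le; auto).
    lra.
  - intros q p1 p2 hq hp1 hp2.
    destruct (G_facts nA nX t Xr fs Q K x0 _ hX0 hx0 hQ hK (fQ p1 hp1)) as [ne1 [lub1 [hA [g1 _]]]].
    destruct (G_facts nA nX t Xr fs Q K x0 _ hX0 hx0 hQ hK (fQ p2 hp2)) as [ne2 [lub2 [_ [g2 _]]]].
    set (G1 := G nA nX t Xr fs K (fvec nA nX fs p1)) in *.
    set (G2 := G nA nX t Xr fs K (fvec nA nX fs p2)) in *.
    set (ym := fun i => q * fvec nA nX fs p1 i + (1 - q) * fvec nA nX fs p2 i).
    set (Sm := feasible_obj nA nX t Xr fs K (fun s => forall i, (i < t)%nat -> s i = ym i)).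
    assert (comb : forall v1 v2,
      feasible_obj nA nX t Xr fs K (fun s => forall i, (i < t)%nat -> s i = fvec nA nX fs p1 i) v1 ->
      feasible_obj nA nX t Xr fs K (fun s => forall i, (i < t)%nat -> s i = fvec nA nX fs p2 i) v2 ->
      Sm (q * v1 + (1 - q) * v2)).
    { intros v1 v2 [pt1 [hK1 [htr1 [hC1 e1]]]] [pt2 [hK2 [htr2 [hC2 e2]]]].
      destruct hK as [k1 [k2 [k3 [k4 k5]]]].
      exists (fun a x => fun b z => q * pt1 a x b z + (1 - q) * pt2 a x b z).
      split; [|split; [|split]].
      - intros a x ha hx. apply (k1 (fun b z => q * pt1 a x b z) (fun b z => (1 - q) * pt2 a x b z));
          apply k2; auto; lra.
      - rewrite (sumAX_ext _ _ _ _ (fun a x => q * trace nA (pt1 a x) + (1 - q) * trace nA (pt2 a x))).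
        + rewrite sumAX_lin, htr1, htr2. ring.
        + intros; apply trace_lin.
      - intros i hi.
        rewrite (sumAX_ext _ _ _ _ (fun a x => q * bell nA nX (fs i) (pt1 a x) + (1 - q) * bell nA nX (fs i) (pt2 a x))).
        + rewrite sumAX_lin, hC1, hC2 by auto. reflexivity.
        + intros; apply bell_lin.
      - rewrite sumAX_lin, e1, e2. reflexivity. }
    assert (lubm : is_lub Sm (G nA nX t Xr fs K ym)).
    { apply supR_lub.
      - destruct ne1 as [w1 hw1], ne2 as [w2 hw2]. eauto.
      - intros v hv. eapply (feas_le1 nA nX t Xr fs Q K); [eauto | eauto | exact hv]. }
    assert (mix : q * G1 + (1 - q) * G2 <= G nA nX t Xr fs K ym).
    { apply (lub_mix _ _ _ _ _ q lub1 lub2 ne1 ne2 hq).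
      intros v1 v2 h1 h2. apply (proj1 lubm). apply comb; auto. }
    assert (hG1 : 0 < G1) by (apply Rlt_le_trans with (/ INR nA); auto; apply Rinv_0_lt_compat; auto).
    assert (hG2 : 0 < G2) by (apply Rlt_le_trans with (/ INR nA); auto; apply Rinv_0_lt_compat; auto).
    assert (hM : 0 < q * G1 + (1 - q) * G2) by nra.
    pose proof (ln_concave G1 G2 q hG1 hG2 hq) as lc.
    pose proof (ln_le' _ _ hM mix) as lm.
    change (H nA nX t Xr fs K ym <= q * H nA nX t Xr fs K (fvec nA nX fs p1) + (1 - q) * H nA nX t Xr fs K (fvec nA nX fs p2)).
    unfold Defs.H, log2. fold G1 G2.
    set (il := / ln 2). assert (0 < il) by (apply Rinv_0_lt_compat; auto).
    unfold Rdiv. fold il.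
    assert (q * ln G1 + (1 - q) * ln G2 <= ln (G nA nX t Xr fs K ym)) by lra.
    assert ((q * ln G1 + (1 - q) * ln G2) * il <= ln (G nA nX t Xr fs K ym) * il)
      by (apply Rmult_le_compat_r; lra).
    nra.
  - intros lo hi _ y hy hbox.
    destruct (G_facts nA nX t Xr fs Q K x0 y hX0 hx0 hQ hK hy) as [ne [lub [hA [g1 _]]]].
    set (Sb := feasible_obj nA nX t Xr fs K (in_box t lo hi)).
    assert (sub : forall v, feasible_obj nA nX t Xr fs K (fun s => forall i, (i < t)%nat -> s i = y i) v -> Sb v).
    { intros v hv. revert hv. apply feas_mono. intros s hs i hti. rewrite (hs i hti). exact (hbox i hti). }
    assert (neb : exists v, Sb v) by (destruct ne as [w hw]; eauto).
    assert (eGb : Gbox nA nX t Xr fs K lo hi = supR Sb).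
    { unfold Gbox. fold Sb. destruct (excluded_middle_informative _); [reflexivity| contradiction]. }
    assert (lubb : is_lub Sb (supR Sb)).
    { apply supR_lub; auto. intros v hv. eapply (feas_le1 nA nX t Xr fs Q K); [eauto | eauto | exact hv]. }
    assert (le : G nA nX t Xr fs K y <= supR Sb).
    { apply (proj2 lub). intros v hv. apply (proj1 lubb). auto. }
    assert (0 < G nA nX t Xr fs K y) by (apply Rlt_le_trans with (/ INR nA); auto; apply Rinv_0_lt_compat; auto).
    rewrite eGb. unfold Defs.H. pose proof (log2_le _ _ H le). lra.
Qed.
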